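(* Let $q$ be a prime power. The nilpotent graph $\Gamma_{\mathfrak{N}}(\mathfrak{t}(2,\mathbb{F}_q))$ is $(q^2-q-1)$-regular.
   Context: $\mathfrak{t}(2,\mathbb{F}_q)$ is the Lie algebra of $2\times 2$ upper triangular matrices over $\mathbb{F}_q$ with bracket $[x,y]=xy-yx$. $\langle a,b\rangle$ denotes the Lie subalgebra generated by $a,b$, and $\mathrm{nil}(L)=\{x\in L\mid \langle h,x\rangle \text{ is nilpotent for all } h\in L\}$. For a finite-dimensional non-nilpotent Lie algebra $L$, the nilpotent graph $\Gamma_{\mathfrak{N}}(L)$ is the simple undirected graph with vertex set $L\setminus\mathrm{nil}(L)$ in which distinct vertices $x,y$ are adjacent iff $\langle x,y\rangle$ is nilpotent. A graph is $k$-regular if every vertex has degree $k$. *)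

(* Defs.v *)
From HB Require Import structures.
From mathcomp Require Import all_boot all_order all_algebra all_field.
From mathcomp Require Import boolp.
Set Implicit Arguments. Unset Strict Implicit. Unset Printing Implicit Defensive.
Import GRing.Theory.
Local Open Scope ring_scope.

Section Lie.
Variable F : finFieldType.
Local Notation M := 'M[F]_2.

Definition lbr (x y : M) : M := x *m y - y *m x.

Definition subspaceb (S : {set M}) : bool :=
  [&& (0 : M) \in S,
      [forall x in S, forall y in S, x + y \in S] &
      [forall c : F, forall x in S, c *: x \in S]].

Definition lspan (A : {set M}) : {set M} :=
  \bigcap_(S : {set M} | subspaceb S && (A \subset S)) S.

Definition lie_subalgb (S : {set M}) : bool :=
  subspaceb S && [forall x in S, forall y in S, lbr x y \in S].

Definition lie_gen (a b : M) : {set M} :=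
  \bigcap_(S : {set M} | [&& lie_subalgb S, a \in S & b \in S]) S.

Fixpoint lcs (S : {set M}) (k : nat) : {set M} :=
  match k with
  | 0 => S
  | k'.+1 => lspan [set lbr x y | x in S, y in lcs S k']
  end.

Definition lie_nilpotent (S : {set M}) : Prop :=
  exists k, lcs S k = [set 0 : M].

Definition t2 : {set M} := [set A : M | A 1 0 == 0].

Definition nilt2 : {set M} :=
  [set x in t2 | `[< forall h, h \in t2 -> lie_nilpotent (lie_gen h x) >]].

Definition nil_graph_vertices : {set M} := t2 :\: nilt2.

Definition nil_graph_adj (x y : M) : bool :=
  [&& x \in nil_graph_vertices, y \in nil_graph_vertices, x != y &
      `[< lie_nilpotent (lie_gen x y) >]].

Definition nil_graph_deg (x : M) : nat :=
  #|[set y : M | nil_graph_adj x y]|.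

Definition nil_graph_regular (k : nat) : Prop :=
  forall x, x \in nil_graph_vertices -> nil_graph_deg x = k.
End Lie.

(* Main.v *)
Require Import Defs.
From HB Require Import structures.
From mathcomp Require Import all_boot all_order all_algebra all_field boolp.
From mathcomp Require Import ring.
Import GRing.Theory.
Local Open Scope ring_scope.
Section S.
Variable F : finFieldType.
Local Notation M := 'M[F]_2.
Lemma I2 (i : 'I_2) : i = 0 \/ i = 1.
Proof. case: i => [[|[|n]] H]; [left|right|done]; exact: val_inj. Qed.
Lemma e0 : ord0 = 0 :> 'I_2. Proof. by apply: val_inj. Qed.
Lemma e1 : lift ord0 ord0 = 1 :> 'I_2. Proof. by apply: val_inj. Qed.
Lemma n01 : (0 == 1 :> 'I_2) = false. Proof. by []. Qed.
Lemma n10 : (1 == 0 :> 'I_2) = false. Proof. by []. Qed.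

Definition br (x y : M) : F := (x 0 0 - x 1 1) * y 0 1 - (y 0 0 - y 1 1) * x 0 1.
Definition E : M := delta_mx 0 1.

Lemma lbrE (x y : M) : x 1 0 = 0 -> y 1 0 = 0 -> lbr x y = br x y *: E.
Proof.
move=> hx hy; apply/matrixP=> i j.
case: (I2 i)=> ->; case: (I2 j)=> ->; rewrite !mxE !big_ord_recl !big_ord0 /=.
all: rewrite /br ?e0 ?e1 ?hx ?hy ?eqxx ?n01 ?n10 /=; ring.
Qed.

Lemma E01 : E 0 1 = 1. Proof. by rewrite !mxE. Qed.
Lemma E10 : E 1 0 = 0. Proof. by rewrite !mxE. Qed.
Lemma E00 : E 0 0 = 0. Proof. by rewrite !mxE. Qed.
Lemma E11 : E 1 1 = 0. Proof. by rewrite !mxE. Qed.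
Lemma E_neq0 : E != 0.
Proof. apply/eqP=> /matrixP/(_ 0 1); rewrite E01 mxE; exact/eqP/oner_neq0. Qed.

Lemma lbr0 (x y : M) : x \in t2 F -> y \in t2 F -> (lbr x y == 0) = (br x y == 0).
Proof.
rewrite !inE => /eqP hx /eqP hy; rewrite lbrE // scaler_eq0 (negbTE E_neq0) orbF.
by [].
Qed.

Lemma sub_lspan (A : {set M}) : A \subset lspan A.
Proof. by apply/bigcapsP=> S /andP[]. Qed.
Lemma lspan_sub (A S : {set M}) : subspaceb S -> A \subset S -> lspan A \subset S.
Proof. by move=> hS hA; apply: bigcap_inf; rewrite hS hA. Qed.
Lemma lspan0 (A : {set M}) : 0 \in lspan A.
Proof. by apply/bigcapP=> S /andP[/and3P[]]. Qed.
Lemma subspace0 : subspaceb [set 0 : M].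
Proof.
apply/and3P; split; first by rewrite inE.
  by apply/forallP=> x; apply/implyP; rewrite inE => /eqP->; apply/forallP=> y;
     apply/implyP; rewrite inE => /eqP->; rewrite addr0 inE.
by apply/forallP=> c; apply/forallP=> x; apply/implyP; rewrite inE => /eqP->;
   rewrite scaler0 inE.
Qed.

Lemma sub_add (S : {set M}) (x y : M) : lie_subalgb S -> x \in S -> y \in S -> x + y \in S.
Proof. by case/andP=> /and3P[_ /forallP h _] _ hx hy; move/(_ x): h; rewrite hx => /forallP/(_ y); rewrite hy. Qed.
Lemma sub_scale (S : {set M}) (c : F) (x : M) : lie_subalgb S -> x \in S -> c *: x \in S.
Proof. by case/andP=> /and3P[_ _ /forallP/(_ c)/forallP/(_ x)] h _ hx; rewrite hx in h. Qed.
Lemma sub_lbr (S : {set M}) (x y : M) : lie_subalgb S -> x \in S -> y \in S -> lbr x y \in S.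
Proof. by case/andP=> _ /forallP/(_ x) h hx hy; rewrite hx in h; move/forallP/(_ y): h; rewrite hy. Qed.

Lemma genP (x y z : M) : reflect (forall S, lie_subalgb S -> x \in S -> y \in S -> z \in S)
  (z \in lie_gen x y).
Proof.
apply: (iffP bigcapP) => h S; first by move=> a b c; apply: h; rewrite a b c.
by case/and3P; apply: h.
Qed.

Lemma comm_nil (x y : M) : lbr x y = 0 -> lie_nilpotent (lie_gen x y).
Proof.
move=> hxy.
set T := [set z : M | [exists p : F * F, z == p.1 *: x + p.2 *: y]].
have Tcomm: forall u v, u \in T -> v \in T -> lbr u v = 0.
  move=> u v; rewrite !inE => /existsP[[a b] /eqP->] /existsP[[c d] /eqP->] /=.
  have xy: x *m y = y *m x by apply/eqP; rewrite -subr_eq0; apply/eqP.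
  rewrite /lbr !mulmxDl !mulmxDr -!scalemxAl -!scalemxAr !scalerA xy.
  rewrite [c * a]mulrC [d * a]mulrC [c * b]mulrC [d * b]mulrC.
  apply/eqP; rewrite subr_eq0; apply/eqP.
  by rewrite addrACA.
have TS: lie_subalgb T.
  apply/andP; split; last first.
    by apply/forallP=> u; apply/implyP=> hu; apply/forallP=> v; apply/implyP=> hv;
       rewrite Tcomm // inE; apply/existsP; exists (0,0); rewrite /= !scale0r addr0.
  apply/and3P; split.
  - by rewrite inE; apply/existsP; exists (0,0); rewrite /= !scale0r addr0.
  - apply/forallP=> u; apply/implyP; rewrite inE => /existsP[[a b] /eqP->].
    apply/forallP=> v; apply/implyP; rewrite inE => /existsP[[c d] /eqP->].
    rewrite inE; apply/existsP; exists (a + c, b + d); rewrite /= !scalerDl.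
    by rewrite addrACA.
  - apply/forallP=> k; apply/forallP=> u; apply/implyP; rewrite inE => /existsP[[a b] /eqP->].
    by rewrite inE; apply/existsP; exists (k * a, k * b); rewrite /= scalerDr !scalerA.
have GT: lie_gen x y \subset T.
  apply/subsetP=> z /genP; apply=> //; rewrite inE; apply/existsP.
    by exists (1,0); rewrite /= scale1r scale0r addr0.
  by exists (0,1); rewrite /= scale1r scale0r add0r.
exists 1%N => /=; apply/eqP; rewrite eqEsubset sub1set lspan0 andbT.
apply: lspan_sub subspace0 _; apply/subsetP=> w /imset2P[u v hu hv ->].
by rewrite inE Tcomm //; apply: (subsetP GT).
Qed.

Lemma noncomm_nonnil (x y : M) : x \in t2 F -> y \in t2 F -> br x y != 0 ->
  ~ lie_nilpotent (lie_gen x y).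
Proof.
rewrite !inE => /eqP hx /eqP hy hb.
set G := lie_gen x y.
have EG : E \in G.
  apply/genP=> S hS hxS hyS.
  have : (br x y)^-1 *: lbr x y \in S by apply: sub_scale => //; exact: sub_lbr.
  by rewrite lbrE // scalerA mulVf // scale1r.
have [g [gG gt d0]] : exists g, [/\ g \in G, g 1 0 = 0 & g 0 0 - g 1 1 != 0].
  case: (eqVneq (x 0 0 - x 1 1) 0) => hx0; last by exists x; split=> //; apply/genP.
  case: (eqVneq (y 0 0 - y 1 1) 0) => hy0; last by exists y; split=> //; apply/genP.
  by move: hb; rewrite /br hx0 hy0 !mul0r subr0 eqxx.
set g' := (g 0 0 - g 1 1)^-1 *: g.
have g'G : g' \in G.
  by apply/genP=> S hS hx' hy'; apply: sub_scale => //; move/genP: gG; apply.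
have g'E : lbr g' E = E.
  rewrite lbrE ?E10 //; last by rewrite mxE gt mulr0.
  rewrite /br E01 E00 E11 !mxE subrr mul0r subr0 mulr1 -mulrBr mulVf // scale1r //.
move=> [k hk].
have : E \in lcs G k.
  elim: k {hk} => [|k IH] //=.
  apply: (subsetP (sub_lspan _)); apply/imset2P; exists g' E => //.
by rewrite hk inE; apply/negP; exact: E_neq0.
Qed.

Lemma nilE (x y : M) : x \in t2 F -> y \in t2 F ->
  lie_nilpotent (lie_gen x y) <-> br x y = 0.
Proof.
move=> hx hy; split=> [h|h].
  by apply/eqP; apply: contraT => hb; case: (noncomm_nonnil x y hx hy hb h).
apply: comm_nil; move: hx hy; rewrite !inE => /eqP hx /eqP hy.
by rewrite lbrE // h scale0r.
Qed.

Definition Z : {set M} := [set z in t2 F | (z 0 1 == 0) && (z 0 0 == z 1 1)].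

Lemma nilt2E : nilt2 F = Z.
Proof.
apply/setP=> z; rewrite !inE; case zt: (z 1 0 == 0) => //=.
have zt' : z \in t2 F by rewrite inE zt.
apply/asboolP/andP.
- move=> h.
  have h1 := h (delta_mx 0 0); have h2 := h E.
  have t1 : delta_mx 0 0 \in t2 F by rewrite inE mxE.
  have t2E : E \in t2 F by rewrite inE E10.
  move/(nilE _ _ t1 zt'): (h1 t1); move/(nilE _ _ t2E zt'): (h2 t2E).
  rewrite /br E00 E11 E01 !mxE /= ?n01 ?n10 ?eqxx /= subrr mul0r sub0r mulr1 subr0 mulr0 mul1r subr0.
  by move/eqP; rewrite oppr_eq0 subr_eq0 => -> ->.
- case=> /eqP h01 /eqP h00 h ht; apply/(nilE _ _ ht zt').
  by rewrite /br h01 h00 subrr mul0r mulr0 subrr.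
Qed.

Lemma entSM (s : F) (x : M) (t : F) i j : (s *: x + t%:M) i j = s * x i j + t *+ (i == j).
Proof. by rewrite !mxE. Qed.

Lemma cardZ : #|Z| = #|F|.
Proof.
have -> : Z = (fun a : F => a%:M) @: [set: F].
  apply/setP=> z; rewrite !inE; apply/andP/imsetP.
  - case=> /eqP z10 /andP[/eqP z01 /eqP z00]; exists (z 0 0); first by rewrite inE.
    apply/matrixP=> i j; case: (I2 i)=> ->; case: (I2 j)=> ->;
      by rewrite !mxE /= ?n01 ?n10 ?eqxx /= ?mulr1n ?mulr0n.
  - case=> a _ ->; rewrite !mxE /= ?n01 ?n10 ?eqxx /= ?mulr1n ?mulr0n; split=> //.
rewrite card_imset ?cardsT // => a b /matrixP/(_ 0 0); by rewrite !mxE /= !mulr1n.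
Qed.

Lemma cardC (x : M) : x 1 0 = 0 -> ~~ ((x 0 1 == 0) && (x 0 0 == x 1 1)) ->
  #|[set y in t2 F | br x y == 0]| = (#|F| ^ 2)%N.
Proof.
move=> hx10 hxZ.
have -> : [set y in t2 F | br x y == 0] =
          (fun p : F * F => p.1 *: x + p.2%:M) @: [set: F * F].
  apply/setP=> y; rewrite !inE; apply/andP/imsetP.
  - case=> /eqP y10 /eqP hb.
    case: (eqVneq (x 0 0 - x 1 1) 0) => had.
    + have b0 : x 0 1 != 0.
        apply: contra hxZ => b0; rewrite b0 /=; by rewrite -subr_eq0 had.
      have yd : y 0 0 - y 1 1 = 0.
        move: hb; rewrite /br had mul0r sub0r => /eqP; rewrite oppr_eq0 mulf_eq0 (negbTE b0) orbF.
        by move/eqP.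
      exists (y 0 1 / x 0 1, y 0 0 - y 0 1 / x 0 1 * x 0 0); first by rewrite inE.
      apply/matrixP=> i j; rewrite entSM.
      case: (I2 i)=> ->; case: (I2 j)=> -> /=; rewrite ?n01 ?n10 ?eqxx /= ?mulr1n ?mulr0n.
      * ring.
      * by rewrite addr0 mulfVK.
      * by rewrite hx10 y10 mulr0 addr0.
      * have -> : x 1 1 = x 0 0 by apply/eqP; rewrite eq_sym -subr_eq0 had.
        have -> : y 1 1 = y 0 0 by apply/eqP; rewrite eq_sym -subr_eq0 yd.
        ring.
    + set s := (y 0 0 - y 1 1) / (x 0 0 - x 1 1).
      have hs : s * (x 0 0 - x 1 1) = y 0 0 - y 1 1 by rewrite /s mulfVK.
      exists (s, y 0 0 - s * x 0 0); first by rewrite inE.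
      apply/matrixP=> i j; rewrite entSM.
      case: (I2 i)=> ->; case: (I2 j)=> -> /=; rewrite ?n01 ?n10 ?eqxx /= ?mulr1n ?mulr0n.
      * ring.
      * rewrite addr0; apply: (mulfI had).
        have : (x 0 0 - x 1 1) * y 0 1 = (y 0 0 - y 1 1) * x 0 1.
          by apply/eqP; rewrite -subr_eq0; apply/eqP.
        move->; rewrite -hs; ring.
      * by rewrite hx10 y10 mulr0 addr0.
      * have -> : s * x 1 1 + (y 0 0 - s * x 0 0) = y 0 0 - s * (x 0 0 - x 1 1) by ring.
        rewrite hs; ring.
  - case=> [[s t] _ ->] /=; rewrite !entSM /= ?n01 ?n10 ?eqxx /= ?mulr1n ?mulr0n.
    rewrite hx10 mulr0 addr0; split=> //; apply/eqP; rewrite /br !entSM /= ?n01 ?n10 ?eqxx /= ?mulr1n ?mulr0n.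
    ring.
rewrite card_imset ?cardsT ?card_prod ?mulnn //.
move=> [s t] [s' t'] /= /matrixP h.
have e00 := h 0 0; have e11 := h 1 1; have e01 := h 0 1.
move: e00 e11 e01; rewrite !entSM /= ?n01 ?n10 ?eqxx /= ?mulr1n ?mulr0n !addr0 => e00 e11 e01.
have ss : s = s'.
  apply/eqP; rewrite -subr_eq0; apply: contraR hxZ => hss.
  have h1 : (s - s') * (x 0 0 - x 1 1) = 0.
    have -> : (s - s') * (x 0 0 - x 1 1) =
      (s * x 0 0 + t) - (s * x 1 1 + t) - ((s' * x 0 0 + t') - (s' * x 1 1 + t')) by ring.
    by rewrite e00 e11 subrr.
  have h2 : (s - s') * x 0 1 = 0 by rewrite mulrBl e01 subrr.
  move: h1 h2 => /eqP; rewrite mulf_eq0 (negbTE hss) /= subr_eq0 => ->.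
  by move/eqP; rewrite mulf_eq0 (negbTE hss) /= => ->.
by move: e00; rewrite ss => /addrI ->.
Qed.
End S.
Theorem corollary4p7 (F : finFieldType) :
  nil_graph_regular F (#|F| ^ 2 - #|F| - 1)%N.
Proof.
move=> x; rewrite /nil_graph_vertices nilt2E inE => /andP[hZ ht].
have hx10 : x 1 0 = 0 by apply/eqP; rewrite inE in ht.
have hxZ : ~~ ((x 0 1 == 0) && (x 0 0 == x 1 1)) by rewrite /Z inE ht in hZ.
rewrite /nil_graph_deg.
have -> : [set y | nil_graph_adj x y] = ([set y in t2 F | br F x y == 0] :\: Z F) :\ x.
  apply/setP=> y; rewrite /nil_graph_adj /nil_graph_vertices nilt2E !inE.
  rewrite hx10 eqxx /= hxZ /=.
  case yt: (y 1 0 == 0); last by rewrite /= !andbF.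
  have yt' : y \in t2 F by rewrite inE yt.
  have xt' : x \in t2 F by rewrite inE hx10.
  have -> : `[< lie_nilpotent (lie_gen x y) >] = (br F x y == 0).
    by apply/asboolP/eqP => h; [apply/(nilE _ _ _ xt' yt') | apply/(nilE _ _ _ xt' yt')].
  by rewrite /= (eq_sym y x) !andbT andbCA.
have xC : x \in [set y in t2 F | br F x y == 0] :\: Z F.
  rewrite in_setD hZ inE ht /br; apply/eqP; ring.
have ZC : Z F \subset [set y in t2 F | br F x y == 0].
  apply/subsetP=> z; rewrite !inE => /andP[zt /andP[/eqP z01 /eqP z00]].
  by rewrite zt /br z01 z00 subrr mul0r mulr0 subrr eqxx.
set A := _ :\: Z F in xC *.
have hc := cardsD1 x A; rewrite xC in hc.
have -> : #|A :\ x| = (#|A| - 1)%N by rewrite hc add1n subn1.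
by rewrite /A cardsD (setIidPr ZC) cardZ cardC.
Qed.
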